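(* Let $z_1,\dots,z_n\in\mathbb{Q}[\mathbf{i}]$ (not necessarily distinct) be nonzero and satisfy $|z_j|=|z_k|$ for all $j,k\in[n]$. Write $n=2^s m$ with $s\in\mathbb{Z}_{\ge0}$ and $m$ odd. Then there exists $j\in\{0,1,\dots,s\}$ such that $\sum_{k=1}^n z_k^{2^j}\neq 0$.
   Context: $\mathbb{Q}[\mathbf{i}]=\{x+y\mathbf{i}: x,y\in\mathbb{Q}\}$, $[n]=\{1,\dots,n\}$. (In the paper's notation the quantity $\sum_k z_k^{p}$ is the complex moment $M_p(S)$ of $S=\{z_1,\dots,z_n\}$.) *)

(* Defs.v *)
From mathcomp Require Import all_boot all_order all_algebra all_field.
Set Implicit Arguments. Unset Strict Implicit. Unset Printing Implicit Defensive.
Import Order.TTheory GRing.Theory Num.Theory.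
Local Open Scope ring_scope.

Definition gaussQ : pred algC := fun z => ('Re z \in Crat) && ('Im z \in Crat).

Definition moment (n p : nat) (z : 'I_n -> algC) : algC := \sum_(k < n) z k ^+ p.

(* Main.v *)
Require Import Defs.
From mathcomp Require Import all_boot all_order all_algebra all_field.
From mathcomp Require Import zify ring lra.
Import Order.TTheory GRing.Theory Num.Theory.
Local Open Scope ring_scope.

Definition sqp (u : int * int) : int * int := (u.1 * u.1 - u.2 * u.2, 2 * u.1 * u.2).
Definition gi (p q : int) : algC := p%:~R + 'i * q%:~R.

Lemma gi_sq p q : gi p q ^+ 2 = gi (p * p - q * q) (2 * p * q).
Proof.
rewrite /gi !rmorphB !rmorphM /= expr2.
set a := (p%:~R : algC); set b := (q%:~R : algC); set I := ('i : algC).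
have hI : I * I = -1 by rewrite -expr2 sqrCi.
have -> : (a + I * b) * (a + I * b) = a * a + I * (2%:~R * a * b) + (I * I) * (b * b).
  by rewrite /= ; ring.
rewrite hI; ring.
Qed.

Lemma gi_pow j p q : gi p q ^+ (2 ^ j) = gi (iter j sqp (p, q)).1 (iter j sqp (p, q)).2.
Proof.
elim: j => [|j IH]; first by rewrite expn0 expr1.
by rewrite expnSr exprM IH gi_sq iterS.
Qed.

Lemma gi_sum n (P Q : 'I_n -> int) :
  \sum_(k < n) gi (P k) (Q k) = gi (\sum_(k < n) P k) (\sum_(k < n) Q k).
Proof.
rewrite /gi big_split /= -mulr_sumr !rmorph_sum.
by [].
Qed.

Lemma gi_eq0 p q : gi p q = 0 -> p = 0 /\ q = 0.
Proof.
move=> h.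
have hr : 'Re (gi p q) = p%:~R := Re_rect (realz _ p) (realz _ q).
have hi : 'Im (gi p q) = q%:~R := Im_rect (realz _ p) (realz _ q).
rewrite h in hr hi.
rewrite raddf0 in hr. rewrite raddf0 in hi.
split; apply: (@intr_inj algC); by rewrite -?hr -?hi.
Qed.

Lemma sq4 (x : int) : exists q, x * x = 4 * q + (x %% 2)%Z.
Proof.
have h := divz_eq x 2. set a := (x %/ 2)%Z in h. set e := (x %% 2)%Z in h *.
have : (e = 0 \/ e = 1) by rewrite /e; lia.
case=> he; rewrite he in h *; exists (a*a + a * e); rewrite h he; ring.
Qed.

Lemma parity (A B r : int) : A * A + B * B = 2 * r + 1 ->
  exists al be, A * A = 4 * al + (A %% 2)%Z /\ B * B = 4 * be + 1 - (A %% 2)%Z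
     /\ (B %% 2)%Z = 1 - (A %% 2)%Z.
Proof.
move=> h; have [al ha] := sq4 A; have [be hb] := sq4 B.
exists al, be.
have hB : (B %% 2)%Z = 1 - (A %% 2)%Z by lia.
by rewrite hb hB; split => //; split => //; ring.
Qed.

Lemma ab_even (A B r : int) : A * A + B * B = 2 * r + 1 -> exists w, A * B = 2 * w.
Proof.
move=> /parity [al [be [_ [_ hB]]]].
have hA := divz_eq A 2; have hB' := divz_eq B 2.
have : (A %% 2 = 0)%Z \/ (B %% 2 = 0)%Z by lia.
case=> h.
  exists ((A %/ 2)%Z * B); rewrite {1}hA h; ring.
exists (A * (B %/ 2)%Z); rewrite {1}hB' h; ring.
Qed.

Lemma sumE n (X Y Z : 'I_n -> int) c : (forall k, X k = c * Y k + Z k) ->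
  \sum_(k < n) X k = c * \sum_(k < n) Y k + \sum_(k < n) Z k.
Proof.
move=> h; rewrite (eq_bigr _ (fun k _ => h k)) big_split /= mulr_sumr //.
Qed.

Lemma sumC n (d : int) : \sum_(k < n) d = d * n%:Z.
Proof. rewrite sumr_const card_ord; lia. Qed.

Lemma odd_pow (r : int) k : exists w, (2 * r + 1) ^+ k = 2 * w + 1.
Proof.
elim: k => [|k [w IH]]; first by exists 0; rewrite expr0.
exists (2 * r * w + r + w); rewrite exprS IH; ring.
Qed.

Lemma high (A B r : int) t : A * A + B * B = 2 * r + 1 -> exists X Y,
  iter t.+2 sqp (A, B) = ((2 * r + 1) ^+ (2 ^ t.+1) + 2 ^+ t.+3 * X, 2 ^+ t.+3 * Y).
Proof.
move=> hR; elim: t => [|t [X [Y IH]]].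
  have [w hw] := ab_even _ _ _ hR.
  exists (- (A * A * B * B)), (w * (A * A - B * B)).
  rewrite /= /sqp /= -hR; congr pair.
    rewrite /=; ring.
  transitivity (4 * (A * B) * (A * A - B * B)); first ring.
  rewrite hw; ring.
rewrite iterS IH /sqp /=.
set c := (2 * r + 1) ^+ (2 ^ t.+1).
have hc : (2 * r + 1) ^+ (2 ^ t.+2) = c * c by rewrite expnS mulnC exprM expr2.
rewrite hc.
exists (c * X + 2 ^+ t.+2 * (X * X - Y * Y)), (c * Y + 2 * 2 ^+ t.+2 * X * Y).
rewrite !exprS; congr pair; ring.
Qed.

Lemma core n (A B : 'I_n -> int) r (hR : forall k, A k * A k + B k * B k = 2 * r + 1)
  s m (hm : odd m) (hn : n = (2 ^ s * m)%N) :
  exists j, (j <= s)%N /\ (\sum_(k < n) (iter j sqp (A k, B k)).1 != 0 \/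
                          \sum_(k < n) (iter j sqp (A k, B k)).2 != 0).
Proof.
have hm2 : m = (2 * m./2 + 1)%N by have := odd_double_half m; rewrite hm /=; lia.
case: s hn => [|[|t]] hn.
- exists 0%N; split => //=.
  have hk : forall k, A k + B k = 2 * ((A k %/ 2)%Z + (B k %/ 2)%Z) + 1.
    move=> k; have [al [be [_ [_ hB]]]] := parity _ _ _ (hR k).
    have := divz_eq (A k) 2; have := divz_eq (B k) 2; lia.
  have := sumE _ _ _ (fun k => 1) _ hk; rewrite sumC big_split /= => hs.
  case: (eqVneq (\sum_(k < n) A k) 0) => hA; [right|left => //].
  apply/eqP => hB; rewrite hA hB in hs; lia.
- have hk : forall k, exists w, A k * A k - B k * B k = 4 * w + (2 * (A k %% 2)%Z - 1).
    move=> k; have [al [be [h1 [h2 _]]]] := parity _ _ _ (hR k).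
    exists (al - be); rewrite h1 h2; ring.
  have [W hW] := fin_all_exists hk.
  have hs1 := sumE _ _ _ _ _ hW.
  have hs2 := sumE _ _ _ (fun k => -1) _ (fun k => erefl (2 * (A k %% 2)%Z - 1)).
  have hk0 : forall k, A k = 2 * (A k %/ 2)%Z + (A k %% 2)%Z.
    move=> k; have := divz_eq (A k) 2; lia.
  have hs0 := sumE _ _ _ _ _ hk0.
  rewrite sumC in hs2.
  case: (eqVneq (\sum_(k < n) A k) 0) => hA; last by exists 0%N; split => //; left.
  exists 1%N; split => //; left; rewrite /=.
  apply/eqP => h1; rewrite h1 hs2 in hs1; rewrite hA in hs0; lia.
- exists t.+2; split => //; left.
  have [X hX] := fin_all_exists (fun k => high (A k) (B k) r t (hR k)).
  have [Y hY] := fin_all_exists hX.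
  set c := (2 * r + 1) ^+ (2 ^ t.+1).
  have hX1 : forall k, (iter t.+2 sqp (A k, B k)).1 = 2 ^+ t.+3 * X k + c.
    by move=> k; rewrite hY /= addrC.
  have hs := sumE _ _ _ _ _ hX1; rewrite sumC in hs.
  have [w hw] := odd_pow r (2 ^ t.+1).
  have hnz : (n : int) = 2 ^+ t.+2 * m%:Z.
    rewrite hn PoszM; congr (_ * _); elim: (t.+2) => // k IH.
    by rewrite expnS PoszM IH exprS.
  rewrite hs /c hw hnz.
  have hS : (2 : int) ^+ t.+2 != 0 by rewrite expf_neq0.
  rewrite hm2.
  have -> : 2 ^+ t.+3 * (\sum_(i < n) X i) + (2 * w + 1) * (2 ^+ t.+2 * (2 * m./2 + 1)%N%:Z)
     = 2 ^+ t.+2 * (2 * ((\sum_(i < n) X i) + 2 * w * m./2%:Z + w + m./2%:Z) + 1).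
    rewrite PoszD PoszM !exprS; ring.
  rewrite mulf_eq0 negb_or hS /=; lia.
Qed.

Lemma core_alg n (A B : 'I_n -> int) r (hR : forall k, A k * A k + B k * B k = 2 * r + 1)
  s m (hm : odd m) (hn : n = (2 ^ s * m)%N) :
  exists j, (j <= s)%N /\ \sum_(k < n) gi (A k) (B k) ^+ (2 ^ j) != 0.
Proof.
have [j [hj H]] := core n A B r hR s m hm hn.
exists j; split => //.
rewrite (eq_bigr _ (fun k _ => gi_pow j (A k) (B k))) gi_sum.
apply/eqP => /gi_eq0 [h1 h2]; by case: H; rewrite ?h1 ?h2 eqxx.
Qed.

Lemma gi_mul11 p q : gi (p - q) (p + q) = gi 1 1 * gi p q.
Proof.
rewrite /gi rmorphB rmorphD /=.
set a := (p%:~R : algC); set b := (q%:~R : algC); set I := ('i : algC).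
have hI : I * I = -1 by rewrite -expr2 sqrCi.
have -> : (1%:~R + I * 1%:~R) * (a + I * b) = a + I * (a + b) + (I * I) * b.
  by rewrite /=; ring.
rewrite hI; ring.
Qed.

Lemma reduce N : forall n (A B : 'I_n -> int) R, (`|R| <= N)%N -> R != 0 ->
  (forall k, A k * A k + B k * B k = R) -> forall s m, odd m -> n = (2 ^ s * m)%N ->
  exists j, (j <= s)%N /\ \sum_(k < n) gi (A k) (B k) ^+ (2 ^ j) != 0.
Proof.
elim: N => [|N IH] n A B R hN hR0 hAB s m hm hn.
  exfalso; move: hR0 => /eqP; lia.
have : (R %% 2 = 1)%Z \/ (R %% 2 = 0)%Z by lia.
case=> hpar.
  apply: (core_alg n A B (R %/ 2)%Z) hm hn => k.
  rewrite hAB; have := divz_eq R 2; lia.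
pose A' k := ((A k + B k) %/ 2)%Z.
pose B' k := ((B k - A k) %/ 2)%Z.
have hk : forall k, A k = A' k - B' k /\ B k = A' k + B' k.
  move=> k; have [al ha] := sq4 (A k); have [be hb] := sq4 (B k).
  have := hAB k; rewrite ha hb => h.
  have := divz_eq R 2; have := divz_eq (A k) 2; have := divz_eq (B k) 2.
  rewrite /A' /B'; lia.
have hR' : forall k, A' k * A' k + B' k * B' k = (R %/ 2)%Z.
  move=> k; have := hAB k; have [-> ->] := hk k => h.
  have e : (A' k - B' k) * (A' k - B' k) + (A' k + B' k) * (A' k + B' k) =
           2 * (A' k * A' k + B' k * B' k) by ring.
  rewrite e in h; have := divz_eq R 2; lia.
have hN' : (`|(R %/ 2)%Z| <= N)%N by have := divz_eq R 2; lia.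
have hR0' : (R %/ 2)%Z != 0 by apply/eqP; have := divz_eq R 2; move: hR0 => /eqP; lia.
have [j [hj H]] := IH n A' B' _ hN' hR0' hR' s m hm hn.
exists j; split => //.
have -> : \sum_(k < n) gi (A k) (B k) ^+ (2 ^ j) =
          gi 1 1 ^+ (2 ^ j) * \sum_(k < n) gi (A' k) (B' k) ^+ (2 ^ j).
  rewrite mulr_sumr; apply: eq_bigr => k _.
  by have [-> ->] := hk k; rewrite gi_mul11 exprMn.
rewrite mulf_neq0 // expf_neq0 //.
by apply/eqP => /gi_eq0 [].
Qed.

Theorem theorem1p5 (n : nat) (z : 'I_n -> algC)
  (hQ : forall k, z k \in gaussQ)
  (hnz : forall k, z k != 0)
  (habs : forall j k, `|z j| = `|z k|)
  (s m : nat) (hm : odd m) (hn : n = (2 ^ s * m)%N) :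
  exists j : nat, (j <= s)%N /\ \sum_(k < n) z k ^+ (2 ^ j) != 0.
Proof.
have hn0 : (0 < n)%N.
  by rewrite hn muln_gt0 expn_gt0 /=; case: (m) hm.
pose k0 : 'I_n := Ordinal hn0.
have hRe k : 'Re (z k) \in Crat by case/andP: (hQ k).
have hIm k : 'Im (z k) \in Crat by case/andP: (hQ k).
pose a k := getCrat ('Re (z k)).
pose b k := getCrat ('Im (z k)).
have ha k : ratr (a k) = 'Re (z k) := getCratK (hRe k).
have hb k : ratr (b k) = 'Im (z k) := getCratK (hIm k).
pose d k := denq (a k) * denq (b k).
pose D := \prod_(k < n) d k.
pose A k := numq (a k) * denq (b k) * \prod_(i < n | i != k) d i.
pose B k := numq (b k) * denq (a k) * \prod_(i < n | i != k) d i.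
have hD k : D = d k * \prod_(i < n | i != k) d i by rewrite /D (bigD1 k).
have hqa k : ratr (a k) * (D%:~R : algC) = (A k)%:~R.
  have hq : a k * D%:~R = (A k)%:~R :> rat.
    by rewrite (hD k) /A /d !intrM (numqE (a k)); ring.
  by have := congr1 (ratr : rat -> algC) hq; rewrite rmorphM /= !ratr_int.
have hqb k : ratr (b k) * (D%:~R : algC) = (B k)%:~R.
  have hq : b k * D%:~R = (B k)%:~R :> rat.
    by rewrite (hD k) /B /d !intrM (numqE (b k)); ring.
  by have := congr1 (ratr : rat -> algC) hq; rewrite rmorphM /= !ratr_int.
have hzA k : z k * D%:~R = gi (A k) (B k).
  by rewrite {1}(algCrect (z k)) -ha -hb mulrDl hqa -[(_ * ratr (b k)) * _]mulrA hqb.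
have hD0 : (D%:~R : algC) != 0.
  rewrite intr_eq0; apply/prodf_neq0 => i _; by rewrite mulf_neq0 ?denq_neq0.
have hn2 k : ((A k * A k + B k * B k)%:~R : algC) = `|z k * D%:~R| ^+ 2.
  by rewrite hzA /gi normC2_rect ?realz // rmorphD !rmorphM /= !expr2.
pose R := A k0 * A k0 + B k0 * B k0.
have hAB k : A k * A k + B k * B k = R.
  by apply: (@intr_inj algC); rewrite hn2 hn2 !normrM (habs k k0).
have hR0 : R != 0.
  by rewrite -(intr_eq0 algC) hn2 expf_neq0 // normr_eq0 mulf_neq0.
have [j [hj H]] := reduce `|R|%N n A B R (leqnn _) hR0 hAB s m hm hn.
exists j; split => //.
apply: contraNneq H => h.
rewrite -(eq_bigr _ (fun k _ => congr1 (fun x => x ^+ (2 ^ j)) (hzA k))).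
by rewrite (eq_bigr _ (fun k _ => exprMn _ _ _)) -mulr_suml h mul0r.
Qed.
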